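(* Let $\tilde a,\tilde b,\tilde c,\tilde d>0$, $\tilde p\in(4,\infty)$, $\tilde q\in(0,2)$, and $f(t)=\tilde at^2+\tilde bt^4-\tilde ct^{\tilde p}-\tilde dt^{\tilde q}$ for $t\ge0$. Put $X=\frac{8(4-\tilde q)}{\tilde p(\tilde p-2)(\tilde p-\tilde q)}$. If $$\Big[X^{\frac{4-\tilde q}{\tilde p-4}}-X^{\frac{\tilde p-\tilde q}{\tilde p-4}}\Big]\Big[\frac{\tilde a}{\tilde d}\Big(\frac{\tilde b}{\tilde c}\Big)^{\frac{2-\tilde q}{\tilde p-4}}+\frac1{\tilde d}\frac{\tilde b^{\frac{\tilde p-\tilde q}{\tilde p-4}}}{\tilde c^{\frac{4-\tilde q}{\tilde p-4}}}\Big]>1,$$ then $f$ has on $[0,\infty)$ a local strict minimum at a negative level and a global strict maximum at a positive level. *)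

(* Defs.v *)
From Stdlib Require Import Reals.
Open Scope R_scope.

(* Real power t^s for t >= 0, with the convention 0^s = 0 (used for s > 0). *)
Definition rpow (t s : R) : R := if Rle_dec t 0 then 0 else Rpower t s.

Definition fabcd (a b c d p q : R) (t : R) : R :=
  a * t ^ 2 + b * t ^ 4 - c * rpow t p - d * rpow t q.

Definition strict_local_min_on_nonneg (g : R -> R) (t0 : R) : Prop :=
  0 <= t0 /\ exists delta, 0 < delta /\
    forall t, 0 <= t -> t <> t0 -> Rabs (t - t0) < delta -> g t0 < g t.

Definition strict_global_max_on_nonneg (g : R -> R) (t1 : R) : Prop :=
  0 <= t1 /\ forall t, 0 <= t -> t <> t1 -> g t < g t1.

(* Main.v *)
Require Import Defs.
From Stdlib Require Import Reals Lra Ranalysis5.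
Open Scope R_scope.

Notation dpl := derivable_pt_lim.

Lemma dpl_eq f x l l' : dpl f x l -> l = l' -> dpl f x l'.
Proof. intros H ->; exact H. Qed.

Lemma dpl_plus f g x l1 l2 : dpl f x l1 -> dpl g x l2 -> dpl (fun t => f t + g t) x (l1 + l2).
Proof. intros; apply (derivable_pt_lim_plus f g); auto. Qed.

Lemma dpl_minus f g x l1 l2 : dpl f x l1 -> dpl g x l2 -> dpl (fun t => f t - g t) x (l1 - l2).
Proof. intros; apply (derivable_pt_lim_minus f g); auto. Qed.

Lemma dpl_cst k x : dpl (fun _ => k) x 0.
Proof. apply derivable_pt_lim_const. Qed.

Lemma dpl_rp k e x : 0 < x -> dpl (fun t => k * Rpower t e) x (k * (e * Rpower x (e - 1))).
Proof. intros; apply (derivable_pt_lim_scal (fun t => Rpower t e)). apply derivable_pt_lim_power; auto. Qed.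

Lemma dpl_pw k n x : dpl (fun t => k * t ^ n) x (k * (INR n * x ^ Nat.pred n)).
Proof. apply (derivable_pt_lim_scal (fun t => t ^ n)). apply derivable_pt_lim_pow. Qed.

Lemma incr_of F F' x y : x < y -> (forall t, x <= t <= y -> dpl F t (F' t)) ->
  (forall t, x < t < y -> 0 < F' t) -> F x < F y.
Proof.
  intros Hxy HD Hs. destruct (MVT_cor2 F F' x y Hxy HD) as [w [Hw Hw2]].
  specialize (Hs w Hw2). nra.
Qed.

Lemma decr_of F F' x y : x < y -> (forall t, x <= t <= y -> dpl F t (F' t)) ->
  (forall t, x < t < y -> F' t < 0) -> F y < F x.
Proof.
  intros Hxy HD Hs. destruct (MVT_cor2 F F' x y Hxy HD) as [w [Hw Hw2]].
  specialize (Hs w Hw2). nra.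
Qed.

Lemma rp_pos t e : 0 < Rpower t e.
Proof. unfold Rpower; apply exp_pos. Qed.

Lemma rp_mul t e1 e2 e : e1 + e2 = e -> Rpower t e1 * Rpower t e2 = Rpower t e.
Proof. intros <-; rewrite Rpower_plus; auto. Qed.

Definition Xv p q := 8 * (4 - q) / (p * (p - 2) * (p - q)).
Definition tau b c p q := exp ((ln (Xv p q) + ln b - ln c) / (p - 4)).
Definition f2 a b c d p q t := a * t ^ 2 + b * t ^ 4 - c * Rpower t p - d * Rpower t q.

Lemma Xv_pos p q : 4 < p -> 0 < q -> q < 2 -> 0 < Xv p q < 1.
Proof.
  intros hp hq0 hq2. unfold Xv.
  assert (H1 : 0 < p * (p - 2) * (p - q)) by (apply Rmult_lt_0_compat; [apply Rmult_lt_0_compat|]; lra).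
  assert (H2: 8 * (4 - q) < p * (p - 2) * (p - q)).
  { assert (8 < p*(p-2)) by nra. nra. }
  split.
  - apply Rdiv_lt_0_compat; lra.
  - apply Rmult_lt_reg_r with (p * (p - 2) * (p - q)); auto.
    unfold Rdiv; rewrite Rmult_assoc, Rinv_l by lra; lra.
Qed.

Lemma exp_minus' x y : exp (x - y) = exp x / exp y.
Proof. unfold Rminus, Rdiv; rewrite exp_plus, exp_Ropp; auto. Qed.

Lemma alg a b c d p q (ha : 0 < a) (hb : 0 < b) (hc : 0 < c) (hd : 0 < d)
  (hp : 4 < p) (hq0 : 0 < q) (hq2 : q < 2) :
  let X := 8 * (4 - q) / (p * (p - 2) * (p - q)) in
  (Rpower X ((4 - q) / (p - 4)) - Rpower X ((p - q) / (p - 4))) *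
  (a / d * Rpower (b / c) ((2 - q) / (p - 4))
   + / d * (Rpower b ((p - q) / (p - 4)) / Rpower c ((4 - q) / (p - 4)))) > 1 ->
  0 < f2 a b c d p q (tau b c p q).
Proof.
  intros X H.
  assert (HX : 0 < X < 1) by (apply (Xv_pos p q); auto).
  assert (lXn : ln X < 0) by (rewrite <- ln_1; apply ln_increasing; lra).
  unfold f2, tau. fold (Xv p q) in *. change (Xv p q) with X.
  set (lX := ln X) in *. set (lb := ln b). set (lc := ln c).
  assert (Eb : b = exp lb) by (unfold lb; rewrite exp_ln; auto).
  assert (Ec : c = exp lc) by (unfold lc; rewrite exp_ln; auto).
  assert (EX : X = exp lX) by (unfold lX; rewrite exp_ln; lra).
  set (l := (lX + lb - lc) / (p - 4)).
  assert (P2 : forall n, exp l ^ n = exp (INR n * l)).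
  { intro n. rewrite <- Rpower_pow by apply exp_pos. unfold Rpower. rewrite ln_exp; auto. }
  rewrite !P2. unfold Rpower. rewrite !ln_exp.
  replace (INR 2) with 2 by (simpl; lra). replace (INR 4) with 4 by (simpl; lra).
  unfold Rpower in H. fold lX in H.
  replace (ln (b / c)) with (lb - lc) in H by
    (rewrite Eb, Ec, <- exp_minus', ln_exp; reflexivity).
  fold lb lc in H.
  set (al := (4 - q) / (p - 4)) in *. set (be := (p - q) / (p - 4)) in *.
  set (ga := (2 - q) / (p - 4)) in *.
  assert (Hp4 : p - 4 <> 0) by lra.
  set (XA := exp (al * lX)) in *. set (XB := exp (be * lX)) in *.
  set (XG := exp (ga * lX)). set (U := exp (ga * (lb - lc))) in *.
  set (V := exp (be * lb - al * lc)).
  assert (HV : exp (be * lb) / exp (al * lc) = V) by (unfold V; rewrite exp_minus'; auto).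
  rewrite HV in H.
  set (Eq := exp (q * l)).
  assert (E2 : exp (2 * l) = Eq * (XG * U)).
  { unfold Eq, XG, U; rewrite <- !exp_plus; f_equal; unfold l, ga; field; auto. }
  assert (E4 : b * exp (4 * l) = Eq * (XA * V)).
  { rewrite Eb at 1. unfold Eq, XA, V; rewrite <- !exp_plus; f_equal; unfold l, al, be; field; auto. }
  assert (Ep : c * exp (p * l) = Eq * (XB * V)).
  { rewrite Ec at 1. unfold Eq, XB, V; rewrite <- !exp_plus; f_equal; unfold l, al, be; field; auto. }
  assert (Hq : exp (q * ln (exp l)) = Eq) by (rewrite ln_exp; auto).
  assert (HEq : 0 < Eq) by apply exp_pos.
  assert (HU : 0 < U) by apply exp_pos. assert (HV0 : 0 < V) by apply exp_pos.
  assert (HB0 : 0 < XB) by apply exp_pos.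
  assert (HAG : XA <= XG).
  { unfold XA, XG. left. apply exp_increasing. unfold al, ga.
    assert (al - ga = 2 / (p - 4)) by (unfold al, ga; field; auto).
    assert (0 < 2 / (p - 4)) by (apply Rdiv_lt_0_compat; lra). nra. }
  rewrite E2, E4, Ep.
  assert (H1 : (XA - XB) * (a * U + V) > d).
  { assert (E : (XA - XB) * (a / d * U + / d * V) = (XA - XB) * (a * U + V) / d) by (field; lra).
    rewrite E in H. apply Rmult_gt_compat_r with (r := d) in H; auto.
    unfold Rdiv in H. rewrite Rmult_assoc, Rinv_l in H by lra. lra. }
  assert (H2 : XA - XB > 0).
  { destruct (Rle_lt_dec (XA - XB) 0) as [h|h]; auto.
    assert (0 <= a * U + V) by nra. nra. }
  assert (a * U * (XA - XB) <= a * U * XG) by (apply Rmult_le_compat_l; nra).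
  assert (0 < a * XG * U + (XA - XB) * V - d) by nra.
  nra.
Qed.

Definition f2d (a b c d p q t : R) := a * (INR 2 * t ^ 1) + b * (INR 4 * t ^ 3) - c * (p * Rpower t (p - 1)) - d * (q * Rpower t (q - 1)).
Definition Gf (a b c d p q t : R) := 2 * a * Rpower t (2 - q) + 4 * b * Rpower t (4 - q) - p * c * Rpower t (p - q) - q * d.
Definition Gd (a b c d p q t : R) := 2 * a * ((2 - q) * Rpower t (2 - q - 1)) + 4 * b * ((4 - q) * Rpower t (4 - q - 1)) - p * c * ((p - q) * Rpower t (p - q - 1)) - 0.
Definition Hf (a b c d p q t : R) := 2 * a * (2 - q) + 4 * b * (4 - q) * t ^ 2 - p * c * (p - q) * Rpower t (p - 2).
Definition Hd (a b c d p q t : R) := 0 + 4 * b * (4 - q) * (INR 2 * t ^ Nat.pred 2) - p * c * (p - q) * ((p - 2) * Rpower t (p - 2 - 1)).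

Lemma pw_rp n t : 0 < t -> t ^ n = Rpower t (INR n).
Proof. intros; rewrite Rpower_pow; auto. Qed.

Lemma f2_der a b c d p q t : 0 < t -> dpl (f2 a b c d p q) t (f2d a b c d p q t).
Proof.
  intros. unfold f2, f2d.
  apply dpl_minus; [apply dpl_minus; [apply dpl_plus; apply dpl_pw | apply dpl_rp] | apply dpl_rp]; auto.
Qed.

Lemma G_der a b c d p q t : 0 < t -> dpl (Gf a b c d p q) t (Gd a b c d p q t).
Proof.
  intros. unfold Gf, Gd.
  apply dpl_minus; [apply dpl_minus; [apply dpl_plus; apply dpl_rp | apply dpl_rp] | apply dpl_cst]; auto.
Qed.

Lemma H_der a b c d p q t : 0 < t -> dpl (Hf a b c d p q) t (Hd a b c d p q t).
Proof.
  intros. unfold Hf, Hd.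
  apply dpl_minus; [apply dpl_plus; [apply dpl_cst | apply dpl_pw] | apply dpl_rp]; auto.
Qed.

Lemma f2d_eq a b c d p q t : 0 < t -> f2d a b c d p q t = Rpower t (q - 1) * Gf a b c d p q t.
Proof.
  intros ht. unfold f2d, Gf.
  assert (e1 : Rpower t (q - 1) * Rpower t (2 - q) = t ^ 1).
  { rewrite pw_rp by auto. apply rp_mul. simpl; ring. }
  assert (e2 : Rpower t (q - 1) * Rpower t (4 - q) = t ^ 3).
  { rewrite pw_rp by auto. apply rp_mul. simpl; ring. }
  assert (e3 : Rpower t (q - 1) * Rpower t (p - q) = Rpower t (p - 1)).
  { apply rp_mul. ring. }
  transitivity (2 * a * (Rpower t (q - 1) * Rpower t (2 - q)) + 4 * b * (Rpower t (q - 1) * Rpower t (4 - q))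
     - p * c * (Rpower t (q - 1) * Rpower t (p - q)) - q * d * Rpower t (q - 1)).
  - rewrite e1, e2, e3. simpl; ring.
  - ring.
Qed.

Lemma Gd_eq a b c d p q t : 0 < t -> Gd a b c d p q t = Rpower t (1 - q) * Hf a b c d p q t.
Proof.
  intros ht. unfold Gd, Hf.
  assert (e2 : Rpower t (1 - q) * t ^ 2 = Rpower t (4 - q - 1)).
  { rewrite pw_rp by auto. apply rp_mul. simpl; ring. }
  assert (e3 : Rpower t (1 - q) * Rpower t (p - 2) = Rpower t (p - q - 1)).
  { apply rp_mul. ring. }
  replace (2 - q - 1) with (1 - q) by ring.
  rewrite <- e2, <- e3. ring.
Qed.

Lemma Hd_eq a b c d p q t : 0 < t -> Hd a b c d p q t = t * (8 * b * (4 - q) - p * c * (p - q) * (p - 2) * Rpower t (p - 4)).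
Proof.
  intros ht. unfold Hd.
  assert (e3 : t * Rpower t (p - 4) = Rpower t (p - 2 - 1)).
  { rewrite <- (Rpower_1 t) at 1 by auto. apply rp_mul. ring. }
  rewrite <- e3. simpl; ring.
Qed.

Lemma tau_pos b c p q : 0 < tau b c p q.
Proof. apply exp_pos. Qed.

Lemma tau_pow b c p q : 0 < b -> 0 < c -> 4 < p -> 0 < q -> q < 2 ->
  Rpower (tau b c p q) (p - 4) = Xv p q * b / c.
Proof.
  intros hb hc hp hq0 hq2. destruct (Xv_pos p q hp hq0 hq2).
  unfold tau, Rpower at 1. rewrite ln_exp.
  replace ((p - 4) * ((ln (Xv p q) + ln b - ln c) / (p - 4))) with (ln (Xv p q) + ln b - ln c) by (field; lra).
  rewrite exp_minus', exp_plus, !exp_ln; auto.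
Qed.

Lemma H_pos_small a b c d p q (ha : 0 < a) (hb : 0 < b) (hc : 0 < c) (hd : 0 < d)
  (hp : 4 < p) (hq0 : 0 < q) (hq2 : q < 2) t :
  0 < t <= tau b c p q -> 0 < Hf a b c d p q t.
Proof.
  intros [ht1 ht2]. unfold Hf.
  assert (e : Rpower t (p - 2) = t ^ 2 * Rpower t (p - 4)).
  { rewrite pw_rp by auto. symmetry; apply rp_mul. simpl; ring. }
  rewrite e.
  assert (hP : Rpower t (p - 4) <= Xv p q * b / c).
  { rewrite <- tau_pow by auto. apply Rle_Rpower_l; lra. }
  assert (hK : p * c * (p - q) * (Xv p q * b / c) * (p - 2) = 8 * (4 - q) * b).
  { unfold Xv. field. repeat split; lra. }
  assert (hK2 : p * c * (p - q) * (Xv p q * b / c) < 4 * b * (4 - q)).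
  { apply Rmult_lt_reg_r with (p - 2); [lra|]. rewrite hK.
    assert (0 < b * (4 - q)) by nra. nra. }
  assert (0 < p * c * (p - q)) by (apply Rmult_lt_0_compat; [apply Rmult_lt_0_compat|]; lra).
  assert (p * c * (p - q) * Rpower t (p - 4) < 4 * b * (4 - q)).
  { apply Rle_lt_trans with (2 := hK2). apply Rmult_le_compat_l; lra. }
  assert (0 < t ^ 2) by (apply pow_lt; auto).
  assert (0 < 2 * a * (2 - q)) by nra.
  nra.
Qed.

Lemma Hd_neg a b c d p q (ha : 0 < a) (hb : 0 < b) (hc : 0 < c) (hd : 0 < d)
  (hp : 4 < p) (hq0 : 0 < q) (hq2 : q < 2) t :
  tau b c p q < t -> Hd a b c d p q t < 0.
Proof.
  intros ht. pose proof (tau_pos b c p q).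
  rewrite Hd_eq by lra.
  assert (hP : Xv p q * b / c < Rpower t (p - 4)).
  { rewrite <- tau_pow by auto. apply Rlt_Rpower_l; lra. }
  assert (hK : p * c * (p - q) * (p - 2) * (Xv p q * b / c) = 8 * (4 - q) * b).
  { unfold Xv. field. repeat split; lra. }
  assert (0 < p * c * (p - q) * (p - 2)) by (repeat apply Rmult_lt_0_compat; lra).
  assert (p * c * (p - q) * (p - 2) * (Xv p q * b / c) < p * c * (p - q) * (p - 2) * Rpower t (p - 4))
    by (apply Rmult_lt_compat_l; auto).
  nra.
Qed.

Lemma H_shape a b c d p q (ha : 0 < a) (hb : 0 < b) (hc : 0 < c) (hd : 0 < d)
  (hp : 4 < p) (hq0 : 0 < q) (hq2 : q < 2) u v :
  0 < u -> u < v -> Hf a b c d p q u <= 0 -> Hf a b c d p q v < 0.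
Proof.
  intros hu huv hH.
  destruct (Rle_lt_dec u (tau b c p q)) as [h|h].
  - pose proof (H_pos_small a b c d p q ha hb hc hd hp hq0 hq2 u (conj hu h)). lra.
  - assert (Hf a b c d p q v < Hf a b c d p q u); [|lra].
    apply (decr_of _ (Hd a b c d p q)); auto.
    + intros t ht. apply H_der. lra.
    + intros t ht. apply Hd_neg; auto. lra.
Qed.

Lemma G_qc a b c d p q (ha : 0 < a) (hb : 0 < b) (hc : 0 < c) (hd : 0 < d)
  (hp : 4 < p) (hq0 : 0 < q) (hq2 : q < 2) x y z :
  0 < x -> x < y -> y < z -> Gf a b c d p q y <= Gf a b c d p q x -> Gf a b c d p q y <= Gf a b c d p q z -> False.
Proof.
  intros hx hxy hyz h1 h2.
  destruct (MVT_cor2 (Gf a b c d p q) (Gd a b c d p q) x y hxy) as [u [Hu1 Hu2]].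
  { intros t ht. apply G_der. lra. }
  destruct (MVT_cor2 (Gf a b c d p q) (Gd a b c d p q) y z hyz) as [v [Hv1 Hv2]].
  { intros t ht. apply G_der. lra. }
  rewrite Gd_eq in Hu1, Hv1 by lra.
  pose proof (rp_pos u (1 - q)). pose proof (rp_pos v (1 - q)).
  assert (Hf a b c d p q u <= 0).
  { destruct (Rle_lt_dec (Hf a b c d p q u) 0); auto.
    assert (0 < Rpower u (1 - q) * Hf a b c d p q u * (y - x)) by (repeat apply Rmult_lt_0_compat; lra). lra. }
  assert (0 <= Hf a b c d p q v).
  { destruct (Rle_lt_dec 0 (Hf a b c d p q v)); auto.
    assert (Rpower v (1 - q) * Hf a b c d p q v * (z - y) < 0).
    { assert (0 < Rpower v (1 - q) * (- Hf a b c d p q v) * (z - y)) by (repeat apply Rmult_lt_0_compat; lra). lra. }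
    lra. }
  pose proof (H_shape a b c d p q ha hb hc hd hp hq0 hq2 u v ltac:(lra) ltac:(lra) H1). lra.
Qed.

Lemma exp_le' x y : x <= y -> exp x <= exp y.
Proof. intros [h|h]; [left; apply exp_increasing; auto | right; subst; auto]. Qed.

Lemma rp_le1 t e1 e2 : 0 < t <= 1 -> e1 <= e2 -> Rpower t e2 <= Rpower t e1.
Proof.
  intros [h1 h2] he. unfold Rpower. apply exp_le'.
  assert (ln t <= 0).
  { destruct h2 as [h2|h2]. - rewrite <- ln_1; left; apply ln_increasing; lra. - subst; rewrite ln_1; lra. }
  nra.
Qed.

Lemma small_pow e m : 0 < e -> 0 < m -> exists s0, 0 < s0 <= 1 /\ forall t, 0 < t <= s0 -> Rpower t e < m.
Proof.
  intros he hm. exists (Rmin 1 (Rpower (m / 2) (/ e))).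
  pose proof (rp_pos (m / 2) (/ e)).
  split.
  - split; [apply Rmin_glb_lt; lra | apply Rmin_l].
  - intros t [ht1 ht2].
    assert (t <= Rpower (m / 2) (/ e)) by (eapply Rle_trans; [apply ht2 | apply Rmin_r]).
    apply Rle_lt_trans with (Rpower (Rpower (m / 2) (/ e)) e).
    + apply Rle_Rpower_l; lra.
    + rewrite Rpower_mult, Rinv_l, Rpower_1 by lra. lra.
Qed.

Lemma f_small a b c d p q (ha : 0 < a) (hb : 0 < b) (hc : 0 < c) (hd : 0 < d)
  (hp : 4 < p) (hq0 : 0 < q) (hq2 : q < 2) :
  exists s0, 0 < s0 /\ forall t, 0 < t <= s0 -> f2 a b c d p q t < 0.
Proof.
  destruct (small_pow (2 - q) (d / (a + b))) as [s0 [hs0 Hs]]; try lra.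
  { apply Rdiv_lt_0_compat; lra. }
  exists s0. split; [lra|]. intros t ht.
  specialize (Hs t ht).
  assert (Hs' : (a + b) * Rpower t (2 - q) < d).
  { apply Rmult_lt_compat_l with (r := a + b) in Hs; [|lra].
    unfold Rdiv in Hs. rewrite <- Rmult_assoc, (Rmult_comm (a+b) d), Rmult_assoc, Rinv_r, Rmult_1_r in Hs by lra. lra. }
  unfold f2.
  assert (e : t ^ 2 = Rpower t q * Rpower t (2 - q)).
  { rewrite pw_rp by lra. symmetry; apply rp_mul. simpl; ring. }
  assert (t ^ 4 <= t ^ 2).
  { assert (t ^ 2 <= 1). { replace 1 with (1 ^ 2) by ring. apply pow_incr; lra. }
    replace (t ^ 4) with (t ^ 2 * t ^ 2) by ring. assert (0 <= t ^ 2) by (apply pow_le; lra). nra. }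
  pose proof (rp_pos t p). pose proof (rp_pos t q). pose proof (rp_pos t (2 - q)).
  assert (Hab : a * t ^ 2 + b * t ^ 4 <= (a + b) * t ^ 2) by nra.
  rewrite e in Hab.
  assert ((a + b) * (Rpower t q * Rpower t (2 - q)) < d * Rpower t q).
  { replace ((a + b) * (Rpower t q * Rpower t (2 - q))) with (Rpower t q * ((a + b) * Rpower t (2 - q))) by ring.
    rewrite (Rmult_comm d). apply Rmult_lt_compat_l; lra. }
  nra.
Qed.

Lemma G_small a b c d p q (ha : 0 < a) (hb : 0 < b) (hc : 0 < c) (hd : 0 < d)
  (hp : 4 < p) (hq0 : 0 < q) (hq2 : q < 2) :
  exists s0, 0 < s0 /\ forall t, 0 < t <= s0 -> Gf a b c d p q t < 0.
Proof.
  destruct (small_pow (2 - q) (q * d / (2 * a + 4 * b))) as [s0 [hs0 Hs]]; try lra.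
  { apply Rdiv_lt_0_compat; nra. }
  exists s0. split; [lra|]. intros t ht.
  specialize (Hs t ht).
  assert (Hs' : (2 * a + 4 * b) * Rpower t (2 - q) < q * d).
  { apply Rmult_lt_compat_l with (r := 2 * a + 4 * b) in Hs; [|lra].
    unfold Rdiv in Hs. rewrite <- Rmult_assoc, (Rmult_comm (2 * a + 4 * b) (q * d)), Rmult_assoc, Rinv_r, Rmult_1_r in Hs by lra. lra. }
  unfold Gf.
  assert (Rpower t (4 - q) <= Rpower t (2 - q)) by (apply rp_le1; lra).
  pose proof (rp_pos t (p - q)).
  assert (0 < p * c) by nra.
  assert (0 < p * c * Rpower t (p - q)) by nra.
  nra.
Qed.

Lemma G_large a b c d p q (ha : 0 < a) (hb : 0 < b) (hc : 0 < c) (hd : 0 < d)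
  (hp : 4 < p) (hq0 : 0 < q) (hq2 : q < 2) C :
  exists L, C < L /\ 0 < L /\ Gf a b c d p q L < 0.
Proof.
  set (M := (2 * a + 4 * b) / (p * c)).
  assert (hM : 0 < M) by (apply Rdiv_lt_0_compat; nra).
  set (L0 := Rpower (M + 1) (/ (p - 4))).
  assert (0 < L0) by apply rp_pos.
  exists (L0 + 1 + Rabs C).
  pose proof (Rle_abs C). pose proof (Rabs_pos C).
  split; [lra|]. split; [lra|].
  set (L := L0 + 1 + Rabs C).
  assert (hL : M + 1 <= Rpower L (p - 4)).
  { replace (M + 1) with (Rpower L0 (p - 4)).
    - apply Rle_Rpower_l; unfold L; lra.
    - unfold L0. rewrite Rpower_mult, Rinv_l, Rpower_1 by lra. auto. }
  unfold Gf.
  assert (Rpower L (2 - q) <= Rpower L (4 - q)) by (apply Rle_Rpower; unfold L; lra).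
  assert (e : Rpower L (p - q) = Rpower L (4 - q) * Rpower L (p - 4)) by (symmetry; apply rp_mul; ring).
  rewrite e.
  assert (eM : p * c * M = 2 * a + 4 * b) by (unfold M; field; lra).
  pose proof (rp_pos L (4 - q)). pose proof (rp_pos L (2 - q)).
  assert (0 < p * c) by nra.
  assert (p * c * (M + 1) <= p * c * Rpower L (p - 4)) by (apply Rmult_le_compat_l; lra).
  assert (p * c * (M + 1) * Rpower L (4 - q) <= p * c * Rpower L (p - 4) * Rpower L (4 - q))
    by (apply Rmult_le_compat_r; lra).
  nra.
Qed.

Lemma fab_pos a b c d p q t : 0 < t -> fabcd a b c d p q t = f2 a b c d p q t.
Proof. intros; unfold fabcd, f2, rpow. destruct (Rle_dec t 0); [lra|auto]. Qed.

Lemma fab_0 a b c d p q : fabcd a b c d p q 0 = 0.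
Proof. unfold fabcd, rpow. destruct (Rle_dec 0 0); [ring | lra]. Qed.

Lemma G_cont a b c d p q t : 0 < t -> continuity_pt (Gf a b c d p q) t.
Proof. intros; apply derivable_continuous_pt. exists (Gd a b c d p q t). apply G_der; auto. Qed.

Theorem lemma4p3 (a b c d p q : R)
  (ha : 0 < a) (hb : 0 < b) (hc : 0 < c) (hd : 0 < d)
  (hp : 4 < p) (hq0 : 0 < q) (hq2 : q < 2) :
  let X := 8 * (4 - q) / (p * (p - 2) * (p - q)) in
  (Rpower X ((4 - q) / (p - 4)) - Rpower X ((p - q) / (p - 4))) *
  (a / d * Rpower (b / c) ((2 - q) / (p - 4))
   + / d * (Rpower b ((p - q) / (p - 4)) / Rpower c ((4 - q) / (p - 4)))) > 1 ->
  (exists t0, strict_local_min_on_nonneg (fabcd a b c d p q) t0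
              /\ fabcd a b c d p q t0 < 0) /\
  (exists t1, strict_global_max_on_nonneg (fabcd a b c d p q) t1
              /\ 0 < fabcd a b c d p q t1).
Proof.
  intros X H.
  pose proof (alg a b c d p q ha hb hc hd hp hq0 hq2 H) as hT.
  set (T := tau b c p q) in hT. assert (hT0 : 0 < T) by apply tau_pos.
  set (F := f2 a b c d p q) in *. set (G := Gf a b c d p q).
  destruct (f_small a b c d p q ha hb hc hd hp hq0 hq2) as [s0 [hs0 Hfs]].
  assert (hsT : s0 < T).
  { destruct (Rle_lt_dec T s0) as [h|h]; auto. specialize (Hfs T (conj hT0 h)). unfold F in hT. lra. }
  destruct (MVT_cor2 F (f2d a b c d p q) s0 T hsT) as [w [Hw1 Hw2]].
  { intros t ht. apply f2_der. lra. }
  assert (hw0 : 0 < w) by lra.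
  assert (hGw : 0 < G w).
  { rewrite f2d_eq in Hw1 by lra. specialize (Hfs s0 (conj hs0 (Rle_refl _))).
    pose proof (rp_pos w (q - 1)).
    destruct (Rle_lt_dec (G w) 0) as [h|h]; auto.
    assert (Rpower w (q - 1) * Gf a b c d p q w * (T - s0) <= 0).
    { assert (0 <= Rpower w (q - 1) * (- G w) * (T - s0)) by (repeat apply Rmult_le_pos; lra). unfold G in *. lra. }
    unfold F in *. lra. }
  destruct (G_small a b c d p q ha hb hc hd hp hq0 hq2) as [g0 [hg0 HGs]].
  set (s := Rmin g0 (w / 2)).
  assert (hs : 0 < s) by (apply Rmin_glb_lt; lra).
  assert (hsw : s < w) by (apply Rle_lt_trans with (w / 2); [apply Rmin_r | lra]).
  assert (hGs : G s < 0) by (apply HGs; split; [lra | apply Rmin_l]).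
  destruct (IVT_interv G s w) as [t1 [Ht1 HGt1]]; auto.
  { intros x hx. apply G_cont. lra. }
  destruct (G_large a b c d p q ha hb hc hd hp hq0 hq2 w) as [L [hL1 [hL2 hGL]]].
  destruct (IVT_interv (fun t => - G t) w L) as [t2 [Ht2 HGt2]]; auto.
  { intros x hx. apply (continuity_pt_opp G). apply G_cont. lra. }
  { fold G in hGL; simpl; lra. } { fold G in hGL; simpl; lra. }
  assert (HGt2' : G t2 = 0) by lra.
  assert (ht1a : s < t1 < w).
  { assert (t1 <> s) by (intro e; rewrite e in HGt1; lra).
    assert (t1 <> w) by (intro e; rewrite e in HGt1; lra).
    destruct Ht1 as [[h1|h1] [h2|h2]]; try split; auto; try congruence; subst; congruence. }
  assert (ht2a : w < t2 < L).
  { assert (t2 <> w) by (intro e; rewrite e in HGt2'; lra).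
    assert (t2 <> L) by (intro e; rewrite e in HGt2'; fold G in hGL; lra).
    destruct Ht2 as [[h1|h1] [h2|h2]]; try split; auto; try congruence; subst; congruence. }
  pose proof (G_qc a b c d p q ha hb hc hd hp hq0 hq2) as QC. fold G in QC.
  assert (S1 : forall t, 0 < t < t1 -> G t < 0).
  { intros t ht. destruct (Rle_lt_dec 0 (G t)) as [h|h]; auto.
    exfalso. apply (QC t t1 w); lra. }
  assert (S2 : forall t, t1 < t < t2 -> 0 < G t).
  { intros t ht. destruct (Rle_lt_dec (G t) 0) as [h|h]; auto.
    exfalso. apply (QC t1 t t2); lra. }
  assert (S3 : forall t, t2 < t -> G t < 0).
  { intros t ht. destruct (Rle_lt_dec 0 (G t)) as [h|h]; auto.
    exfalso. apply (QC w t2 t); lra. }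
  assert (M1 : forall x y, 0 < x -> x < y -> y <= t1 -> F y < F x).
  { intros x y hx hxy hy. apply (decr_of _ (f2d a b c d p q)); auto.
    - intros t ht. apply f2_der. lra.
    - intros t ht. rewrite f2d_eq by lra. pose proof (rp_pos t (q - 1)).
      pose proof (S1 t ltac:(lra)). unfold G in *. nra. }
  assert (M2 : forall x y, t1 <= x -> x < y -> y <= t2 -> F x < F y).
  { intros x y hx hxy hy. apply (incr_of _ (f2d a b c d p q)); auto.
    - intros t ht. apply f2_der. lra.
    - intros t ht. rewrite f2d_eq by lra. pose proof (rp_pos t (q - 1)).
      pose proof (S2 t ltac:(lra)). unfold G in *. nra. }
  assert (M3 : forall x y, t2 <= x -> x < y -> F y < F x).
  { intros x y hx hxy. apply (decr_of _ (f2d a b c d p q)); auto.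
    - intros t ht. apply f2_der. lra.
    - intros t ht. rewrite f2d_eq by lra. pose proof (rp_pos t (q - 1)).
      pose proof (S3 t ltac:(lra)). unfold G in *. nra. }
  assert (Neg : forall t, 0 < t <= t1 -> F t < 0).
  { intros t ht. destruct (Rle_lt_dec t s0) as [h|h].
    - apply Hfs; lra.
    - pose proof (M1 s0 t hs0 h (proj2 ht)). pose proof (Hfs s0 (conj hs0 (Rle_refl _))). unfold F in *. lra. }
  assert (hTt1 : t1 < T).
  { destruct (Rle_lt_dec T t1) as [h|h]; auto. pose proof (Neg T (conj hT0 h)). lra. }
  assert (Pos : 0 < F t2).
  { destruct (Rtotal_order T t2) as [h|[h|h]].
    - pose proof (M2 T t2 ltac:(lra) h ltac:(lra)). lra.
    - rewrite <- h; auto.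
    - pose proof (M3 t2 T ltac:(lra) h). lra. }
  split.
  - exists t1. split; [split; [lra|] | rewrite fab_pos by lra; apply Neg; lra].
    exists (Rmin t1 (t2 - t1)). split; [apply Rmin_glb_lt; lra|].
    intros t ht hne hab.
    assert (hab1 : Rabs (t - t1) < t1) by (eapply Rlt_le_trans; [apply hab | apply Rmin_l]).
    assert (hab2 : Rabs (t - t1) < t2 - t1) by (eapply Rlt_le_trans; [apply hab | apply Rmin_r]).
    apply Rabs_def2 in hab1. apply Rabs_def2 in hab2.
    rewrite !fab_pos by lra. fold F.
    destruct (Rtotal_order t t1) as [h|[h|h]].
    + apply M1; lra.
    + contradiction.
    + apply M2; lra.
  - exists t2. split; [split; [lra|] | rewrite fab_pos by lra; auto].
    intros t ht hne. rewrite (fab_pos _ _ _ _ _ _ t2) by lra. fold F.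
    destruct ht as [ht|ht].
    + rewrite fab_pos by lra. fold F.
      destruct (Rle_lt_dec t t1) as [h|h].
      * pose proof (Neg t (conj ht h)). lra.
      * destruct (Rtotal_order t t2) as [h'|[h'|h']].
        -- apply M2; lra.
        -- contradiction.
        -- apply M3; lra.
    + subst. rewrite fab_0. auto.
Qed.
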